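(* Let $\Omega\subset\mathbb{R}^n$ be a bounded domain, $T>0$, $\mathscr D:=\Omega\times(0,T)$, $\mathscr U\subset\mathscr D$ open, and let $e:\mathscr D\times\mathbb{R}\to\mathbb{R}$, $(x,t,r)\mapsto e(x,t)[r]$, be affine in $r$ with $e(x,t)[\pm1]>0$ for $(x,t)\in\mathscr U$. If $e$ is continuous and bounded on $\mathscr U\times[-1,1]$, then the map $(x,t)\mapsto\pi(K_{(x,t)})$ is continuous and bounded on $\mathscr U$ with respect to the Hausdorff metric.
   Context: $n\ge2$; $\mathcal S_0^{n\times n}$ the trace-free symmetric matrices; $Z:=\mathbb{R}\times\mathbb{R}^n\times\mathbb{R}^n\times\mathcal S_0^{n\times n}\times\mathbb{R}$ with elements $z=(\rho,v,m,\sigma,p)$; $\pi(z):=(\rho,v,m,\sigma)$; $K_{(x,t)}:=\{z\in Z:\rho\in\{\pm1\},m=\rho v,v\otimes v-\sigma=e(x,t)[\rho]\mathrm{Id}\}$. *)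

(* Defs.v *)
From HB Require Import structures.
From mathcomp Require Import all_boot all_order all_algebra.
From mathcomp Require Import all_classical all_reals all_analysis.
Set Implicit Arguments. Unset Strict Implicit. Unset Printing Implicit Defensive.
Import Order.TTheory GRing.Theory Num.Theory.
Import numFieldNormedType.Exports.
Local Open Scope classical_set_scope.
Local Open Scope ring_scope.

(* Z = R x R^n x R^n x S_0^{nxn} x R ; an element is ((((rho, v), m), sigma), p).
   Row vectors 'rV_n represent R^n; sigma is an n x n matrix which is required
   to be symmetric and trace-free (membership in S_0^{nxn}). *)
Definition Zsp (R : realType) (n : nat) :=
  (R * 'rV[R]_n * 'rV[R]_n * 'M[R]_n * R)%type.
Definition Wsp (R : realType) (n : nat) :=
  (R * 'rV[R]_n * 'rV[R]_n * 'M[R]_n)%type.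

Definition sym0 (R : realType) (n : nat) (s : 'M[R]_n) : Prop :=
  s^T = s /\ \tr s = 0.

Definition piZ (R : realType) (n : nat) (z : Zsp R n) : Wsp R n := z.1.

(* K_{(x,t)} = {z : rho in {+-1}, m = rho v, v (x) v - sigma = e(x,t)[rho] Id} ;
   e x t r stands for e(x,t)[r]. *)
Definition Kset (R : realType) (n : nat) (e : 'rV[R]_n -> R -> R -> R)
    (x : 'rV[R]_n) (t : R) : set (Zsp R n) :=
  [set z | let: ((((rho, v), m), s), p) := z in
     sym0 s /\ (rho = 1 \/ rho = -1) /\ m = rho *: v /\
     v^T *m v - s = (e x t rho)%:M].

Definition piK (R : realType) (n : nat) (e : 'rV[R]_n -> R -> R -> R)
    (x : 'rV[R]_n) (t : R) : set (Wsp R n) :=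
  (@piZ R n) @` Kset e x t.

Definition wdist (R : realType) (n : nat) (a b : Wsp R n) : R :=
  let: (((r1, v1), m1), s1) := a in
  let: (((r2, v2), m2), s2) := b in
  Num.sqrt ((r1 - r2) ^+ 2 + \sum_i (v1 0 i - v2 0 i) ^+ 2
            + \sum_i (m1 0 i - m2 0 i) ^+ 2
            + \sum_i \sum_j (s1 i j - s2 i j) ^+ 2).

Definition pdist (R : realType) (n : nat) (a : Wsp R n) (B : set (Wsp R n))
  : \bar R := ereal_inf [set (wdist a b)%:E | b in B].

Definition hausdorff (R : realType) (n : nat) (A B : set (Wsp R n)) : \bar R :=
  maxe (ereal_sup [set pdist a B | a in A]) (ereal_sup [set pdist b A | b in B]).

(* Main.v *)
Require Import Defs.
From HB Require Import structures.
From mathcomp Require Import all_boot all_order all_algebra.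
From mathcomp Require Import all_classical all_reals all_analysis.
From mathcomp Require Import ring lra.
Import Order.TTheory GRing.Theory Num.Theory.
Import numFieldNormedType.Exports.
Local Open Scope classical_set_scope.
Local Open Scope ring_scope.

Section S.
Variables (R : realType) (n : nat).

Definition pt (rho : R) (v : 'rV[R]_n) (c : R) : Wsp R n :=
  (rho, v, rho *: v, v^T *m v - c%:M).
Definition sq (v : 'rV[R]_n) := \sum_i v 0 i ^+ 2.

Lemma tr_tv v : \tr (v^T *m v) = sq v.
Proof. by apply: eq_bigr => i _; rewrite !mxE big_ord1 !mxE expr2. Qed.

Lemma piK_inv e x t w : piK e x t w -> exists rho v, (rho = 1 \/ rho = -1) /\
  sq v = n%:R * e x t rho /\ w = pt rho v (e x t rho).
Proof.
case=> [[[[[rho v] m] s] p]] [[sT str] [hr [hm hs]]] <-.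
have hs' : s = v^T *m v - (e x t rho)%:M by rewrite -hs opprB addrC subrK.
exists rho, v; split => //; split.
  move: str; rewrite hs' raddfB /= tr_tv mxtrace_scalar => /eqP.
  by rewrite subr_eq0 mulr_natl => /eqP.
by rewrite /piZ /pt /= hm hs'.
Qed.

Lemma piK_intro e x t rho v : (rho = 1 \/ rho = -1) ->
  sq v = n%:R * e x t rho -> piK e x t (pt rho v (e x t rho)).
Proof.
move=> hr hS; exists (pt rho v (e x t rho), 0) => //.
split; last split => //; last split => //.
  split.
    by rewrite linearB /= trmx_mul trmxK tr_scalar_mx.
  by rewrite raddfB /= tr_tv mxtrace_scalar hS mulr_natl subrr.
by rewrite opprB addrC subrK.
Qed.

Lemma sum_delta (F : 'I_n -> R) i : \sum_j F j *+ (i == j) = F i.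
Proof.
rewrite (bigD1 i) //= eqxx mulr1n big1 ?addr0 // => j hj.
by rewrite eq_sym (negbTE hj) mulr0n.
Qed.

Lemma dsum a b (v : 'rV[R]_n) : \sum_i \sum_j (a * (v 0 i * v 0 j) - b *+ (i == j)) ^+ 2
  = a ^+ 2 * sq v ^+ 2 - 2 * a * b * sq v + n%:R * b ^+ 2.
Proof.
transitivity (\sum_i (\sum_j (a ^+ 2 * v 0 i ^+ 2) * v 0 j ^+ 2
      - (2 * a * b * v 0 i ^+ 2 - b ^+ 2))).
  apply: eq_bigr => i _.
  transitivity (\sum_j ((a ^+ 2 * v 0 i ^+ 2) * v 0 j ^+ 2
     - (2 * a * (v 0 i * v 0 j) * b - b ^+ 2) *+ (i == j))).
    by apply: eq_bigr => j _; case: (i == j); rewrite ?mulr1n ?mulr0n; ring.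
  rewrite sumrB sum_delta; congr (_ - _); ring.
rewrite sumrB; under eq_bigr do rewrite -mulr_sumr.
rewrite -mulr_suml sumrB sumr_const card_ord -mulr_sumr /sq mulr_natl.
rewrite -mulr_sumr -mulrnAr mulr_natl; ring.
Qed.

Definition g (c c' : R) := Num.sqrt (2 * n%:R * (Num.sqrt c - Num.sqrt c') ^+ 2
   + (n%:R ^+ 2 - n%:R) * (c - c') ^+ 2).

Lemma alg (s s' N : R) : s != 0 -> let l := s' / s in
  0 + (1 - l) ^+ 2 * (N * s ^+ 2) + (1 - l) ^+ 2 * (N * s ^+ 2)
  + ((1 - l ^+ 2) ^+ 2 * (N * s ^+ 2) ^+ 2 - 2 * (1 - l ^+ 2) * (s ^+ 2 - s' ^+ 2) * (N * s ^+ 2)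
     + N * (s ^+ 2 - s' ^+ 2) ^+ 2)
  = 2 * N * (s - s') ^+ 2 + (N ^+ 2 - N) * (s ^+ 2 - s' ^+ 2) ^+ 2.
Proof. by move=> hs l; rewrite /l; field. Qed.

Lemma wdist_pt rho v c c' : rho ^+ 2 = 1 -> 0 < c -> 0 <= c' -> sq v = n%:R * c ->
  let l := Num.sqrt c' / Num.sqrt c in
  sq (l *: v) = n%:R * c' /\ wdist (pt rho v c) (pt rho (l *: v) c') = g c c'.
Proof.
move=> hr hc hc' hS l.
have hsc : Num.sqrt c != 0 by rewrite gt_eqF // sqrtr_gt0.
have hl2 : l ^+ 2 = c' / c by rewrite /l expr_div_n !sqr_sqrtr // ltW.
split.
  rewrite /sq; under eq_bigr do rewrite mxE exprMn.
  rewrite -mulr_sumr -/(sq v) hS hl2; field; by rewrite gt_eqF.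
rewrite /wdist /pt /g /=; congr Num.sqrt.
have -> : \sum_i (v 0 i - (l *: v) 0 i) ^+ 2 = (1 - l) ^+ 2 * sq v.
  by rewrite /sq mulr_sumr; apply: eq_bigr => i _; rewrite mxE; ring.
have -> : \sum_i ((rho *: v) 0 i - (rho *: (l *: v)) 0 i) ^+ 2 = (1 - l) ^+ 2 * sq v.
  rewrite /sq mulr_sumr; apply: eq_bigr => i _; rewrite !mxE.
  transitivity (rho ^+ 2 * ((1 - l) ^+ 2 * v 0 i ^+ 2)); first ring.
  by rewrite hr mul1r.
have -> : \sum_i \sum_j ((v^T *m v - c%:M) i j - ((l *: v)^T *m (l *: v) - c'%:M) i j) ^+ 2
   = \sum_i \sum_j ((1 - l ^+ 2) * (v 0 i * v 0 j) - (c - c') *+ (i == j)) ^+ 2.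
  apply: eq_bigr => i _; apply: eq_bigr => j _; rewrite !mxE !big_ord1 !mxE.
  by congr (_ ^+ 2); case: (i == j); rewrite ?mulr1n ?mulr0n; ring.
rewrite dsum hS subrr expr0n /=.
have := alg (Num.sqrt c) (Num.sqrt c') n%:R hsc; rewrite !sqr_sqrtr // ?(ltW hc) //.
Qed.


Lemma g_ge0 c c' : 0 <= g c c'.
Proof. exact: sqrtr_ge0. Qed.

Lemma g_sym c c' : g c c' = g c' c.
Proof. by rewrite /g; congr Num.sqrt; ring. Qed.

Definition G (e : 'rV[R]_n -> R -> R -> R) x t x' t' :=
  g (e x t 1) (e x' t' 1) + g (e x t (-1)) (e x' t' (-1)).

Lemma pdist_le e x t x' t' a :
  (forall rho, rho = 1 \/ rho = -1 -> 0 < e x t rho /\ 0 < e x' t' rho) ->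
  piK e x t a -> (pdist a (piK e x' t') <= (G e x t x' t')%:E)%E.
Proof.
move=> hp /piK_inv [rho [v [hr [hS ->]]]].
have [h1 h2] := hp _ hr.
have hr2 : rho ^+ 2 = 1 by case: hr => ->; rewrite ?sqrrN expr1n.
have [hS' hd] := @wdist_pt rho v _ _ hr2 h1 (ltW h2) hS.
set l := Num.sqrt _ / _ in hS' hd.
have Sb : [set (wdist (pt rho v (e x t rho)) b)%:E | b in piK e x' t']
           (wdist (pt rho v (e x t rho)) (pt rho (l *: v) (e x' t' rho)))%:E.
  by exists (pt rho (l *: v) (e x' t' rho)) => //; exact: piK_intro.
apply: le_trans (ereal_inf_lbound Sb) _.
rewrite hd lee_fin /G.
by case: hr => ->; [rewrite lerDl | rewrite lerDr]; exact: g_ge0.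
Qed.

Lemma haus_le e x t x' t' :
  (forall rho, rho = 1 \/ rho = -1 -> 0 < e x t rho /\ 0 < e x' t' rho) ->
  (hausdorff (piK e x t) (piK e x' t') <= (G e x t x' t')%:E)%E.
Proof.
move=> hp; rewrite /hausdorff ge_max; apply/andP; split;
  apply: ge_ereal_sup => _ [a Aa <-].
  exact: pdist_le.
have -> : G e x t x' t' = G e x' t' x t by rewrite /G g_sym (g_sym (e x t (-1))).
apply: pdist_le => // rho hr; have [] := hp rho hr; by split.
Qed.

Lemma hsq (a b : R) : 0 <= a -> 0 <= b -> (a - b) ^+ 2 <= `|a ^+ 2 - b ^+ 2|.
Proof.
move=> ha hb; case: (lerP b a) => h.
  by rewrite ger0_norm; nra.
by rewrite ltr0_norm; nra.
Qed.

Lemma N_ge0 : 0 <= (n%:R : R) ^+ 2 - n%:R.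
Proof.
case: n => [|m]; first by rewrite expr0n /= subrr.
have : (1 : R) <= m.+1%:R by rewrite ler1n.
set N := (m.+1)%:R; nra.
Qed.

Lemma g_small c c' : 0 < c -> 0 < c' -> `|c - c'| <= 1 ->
  g c c' ^+ 2 <= (2 * n%:R + n%:R ^+ 2) * `|c - c'|.
Proof.
move=> hc hc' h1.
have hN := N_ge0.
have hN0 : (0 : R) <= n%:R by [].
rewrite /g sqr_sqrtr; last first.
  have := sqr_ge0 (Num.sqrt c - Num.sqrt c'); have := sqr_ge0 (c - c'); nra.
have h2 := @hsq _ _ (sqrtr_ge0 c) (sqrtr_ge0 c').
rewrite !sqr_sqrtr ?(ltW hc) ?(ltW hc') // in h2.
have h3 : (c - c') ^+ 2 <= `|c - c'|.
  have -> : (c - c') ^+ 2 = `|c - c'| ^+ 2 by rewrite real_normK // num_real.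
  have := normr_ge0 (c - c'); nra.
set X := (Num.sqrt c - Num.sqrt c') ^+ 2 in h2 *.
set Y := (c - c') ^+ 2 in h3 *.
set D := `|c - c'| in h1 h2 h3 *.
set N := (n%:R : R) in hN hN0 *.
have hD : 0 <= D by exact: normr_ge0.
have k1 : 2 * N * X <= 2 * N * D by apply: ler_wpM2l => //; nra.
have k2 : (N ^+ 2 - N) * Y <= (N ^+ 2 - N) * D by apply: ler_wpM2l.
have k3 : 0 <= N * D by apply: mulr_ge0.
nra.
Qed.

End S.

Arguments g {R} n c c'.
Arguments G {R} n e x t x' t'.
Arguments g_small {R} n c c'.
Arguments g_ge0 {R} n c c'.
Arguments haus_le {R n} e x t x' t'.

Lemma cont_eps (R : realType) (n : nat) (U : set ('rV[R]_n * R)) (e : 'rV[R]_n -> R -> R -> R) :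
  {within [set q : 'rV[R]_n * R * R | U q.1 /\ -1 <= q.2 <= 1],
     continuous (fun q : 'rV[R]_n * R * R => e q.1.1 q.1.2 q.2)} ->
  forall y rho, U y -> -1 <= rho <= 1 -> forall eta, 0 < eta ->
  exists2 d, 0 < d & forall y', U y' -> ball y d y' ->
    `|e y.1 y.2 rho - e y'.1 y'.2 rho| < eta.
Proof.
move=> hc y rho Uy hr eta heta.
have := (proj1 (subspace_continuousP _ _) hc (y, rho) (conj Uy hr)).
move/cvgrPdist_lt/(_ eta heta); rewrite near_withinE => /nbhs_ballP [d d0 hd].
exists d => // y' Uy' byy'; apply: (hd (y', rho)) => //.
by split => //=; exact: ballxx.
Qed.

Theorem lemma3p12 (R : realType) (n : nat) (Omega : set 'rV[R]_n) (T : R)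
  (U : set ('rV[R]_n * R)) (e : 'rV[R]_n -> R -> R -> R) :
  (2 <= n)%N ->
  open Omega -> connected Omega -> Omega !=set0 -> bounded_set Omega ->
  0 < T ->
  open U ->
  U `<=` [set y | Omega y.1 /\ 0 < y.2 < T] ->
  (exists a b : 'rV[R]_n -> R -> R, forall x t r,
      Omega x -> 0 < t < T -> e x t r = a x t + b x t * r) ->
  (forall y, U y -> 0 < e y.1 y.2 1 /\ 0 < e y.1 y.2 (-1)) ->
  {within [set q : 'rV[R]_n * R * R | U q.1 /\ -1 <= q.2 <= 1],
     continuous (fun q : 'rV[R]_n * R * R => e q.1.1 q.1.2 q.2)} ->
  (exists M : R, forall q : 'rV[R]_n * R * R,
      U q.1 -> -1 <= q.2 <= 1 -> `|e q.1.1 q.1.2 q.2| <= M) ->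
  (forall y, U y -> forall eps : R, 0 < eps -> exists2 delta : R, 0 < delta &
      forall y', U y' -> ball y delta y' ->
        (hausdorff (piK e y.1 y.2) (piK e y'.1 y'.2) < eps%:E)%E)
  /\
  (exists C : R, forall y y', U y -> U y' ->
      (hausdorff (piK e y.1 y.2) (piK e y'.1 y'.2) <= C%:E)%E).
Proof.
move=> hn _ _ _ _ _ _ _ _ hpos hcont [M hM].
have hp : forall y, U y -> forall rho : R, rho = 1 \/ rho = -1 -> 0 < e y.1 y.2 rho.
  by move=> y Uy rho [->|->]; case: (hpos y Uy).
have hp2 : forall y y', U y -> U y' -> forall rho : R, rho = 1 \/ rho = -1 ->
    0 < e y.1 y.2 rho /\ 0 < e y'.1 y'.2 rho.
  by move=> y y' Uy Uy' rho hr; split; apply: hp.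
have hN2 : (2 : R) <= n%:R by rewrite (ler_nat R 2 n).
have hr1 : -1 <= (1 : R) <= 1.
  by apply/andP; split; lra.
have hr2 : -1 <= (-1 : R) <= 1.
  by apply/andP; split; lra.
split.
- move=> y Uy eps heps.
  set N := (n%:R : R) in hN2.
  have hK : 0 < 2 * N + N ^+ 2 by nra.
  set Q := (eps / 2) ^+ 2 / (2 * N + N ^+ 2).
  have hQ : 0 < Q by apply: divr_gt0 => //; apply: exprn_gt0; lra.
  have hQK : Q * (2 * N + N ^+ 2) = (eps / 2) ^+ 2 by rewrite /Q divfK // gt_eqF.
  set eta := Order.min 1 Q.
  have heta : 0 < eta by rewrite lt_min; apply/andP; split.
  have heta1 : eta <= 1 by rewrite ge_min lexx.
  have hetaQ : eta <= Q by rewrite ge_min lexx orbT.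
  have hsmall : forall rho : R, rho = 1 \/ rho = -1 -> forall y', U y' ->
      `|e y.1 y.2 rho - e y'.1 y'.2 rho| < eta -> g n (e y.1 y.2 rho) (e y'.1 y'.2 rho) < eps / 2.
    move=> rho hr y' Uy' hlt.
    have [c1 c2] := hp2 y y' Uy Uy' rho hr.
    have h := g_small n _ _ c1 c2 (ltW (lt_le_trans hlt heta1)).
    have hg := g_ge0 n (e y.1 y.2 rho) (e y'.1 y'.2 rho).
    set D := `|_| in hlt h.
    set gg := g _ _ _ in h hg *.
    have k : (2 * N + N ^+ 2) * D < (eps / 2) ^+ 2.
      rewrite -hQK mulrC; apply: (lt_le_trans (y := eta * (2 * N + N ^+ 2))).
        by rewrite ltr_pM2r.
      by rewrite ler_pM2r.
    nra.
  have [d1 d1p hd1] := @cont_eps R n U e hcont _ _ Uy hr1 _ heta.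
  have [d2 d2p hd2] := @cont_eps R n U e hcont _ _ Uy hr2 _ heta.
  exists (Order.min d1 d2); first by rewrite lt_min d1p d2p.
  move=> y' Uy' hb.
  apply: le_lt_trans (haus_le _ _ _ _ _ _) _; first exact: hp2.
  rewrite lte_fin /G (splitr eps); apply: ltrD; apply: hsmall => //.
  + by left.
  + by apply: hd1 => //; apply: le_ball hb; rewrite ge_min lexx.
  + by right.
  + by apply: hd2 => //; apply: le_ball hb; rewrite ge_min lexx orbT.
- set N := (n%:R : R) in hN2.
  have hN := N_ge0 R n.
  have hb : forall y rho, U y -> rho = 1 \/ rho = -1 -> e y.1 y.2 rho <= M.
    move=> y rho Uy hr; apply: le_trans (ler_norm _) _.
    by case: hr => ->; [exact: (hM (y, 1)) | exact: (hM (y, -1))].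
  set K := Num.sqrt (2 * N * (2 * M) + (N ^+ 2 - N) * M ^+ 2).
  exists (K + K) => y y' Uy Uy'.
  apply: le_trans (haus_le _ _ _ _ _ _) _; first exact: hp2.
  rewrite lee_fin /G.
  have hg : forall rho : R, rho = 1 \/ rho = -1 -> g n (e y.1 y.2 rho) (e y'.1 y'.2 rho) <= K.
    move=> rho hr.
    have [c1 c2] := hp2 y y' Uy Uy' rho hr.
    have m1 := hb y rho Uy hr; have m2 := hb y' rho Uy' hr.
    rewrite /g /K ler_sqrt; last first.
      by have := sqr_ge0 M; nra.
    have s1 := sqrtr_ge0 (e y.1 y.2 rho); have s2 := sqrtr_ge0 (e y'.1 y'.2 rho).
    have q1 := sqr_sqrtr (ltW c1); have q2 := sqr_sqrtr (ltW c2).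
    set a := Num.sqrt _ in s1 q1 *; set b := Num.sqrt _ in s2 q2 *.
    set c := e y.1 y.2 rho in c1 m1 q1 *; set c' := e y'.1 y'.2 rho in c2 m2 q2 *.
    have X : (a - b) ^+ 2 <= 2 * M by nra.
    have Y : (c - c') ^+ 2 <= M ^+ 2 by nra.
    have k1 : 2 * N * (a - b) ^+ 2 <= 2 * N * (2 * M) by apply: ler_wpM2l => //; lra.
    have k2 : (N ^+ 2 - N) * (c - c') ^+ 2 <= (N ^+ 2 - N) * M ^+ 2 by apply: ler_wpM2l.
    lra.
  by apply: lerD; apply: hg; [left | right].
Qed.
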